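(* Define normal-ordered differential polynomials $\mathscr{P}^{(k)}_n$ in variables $A_{n-1},\dots,A_1,Q$ recursively by $\mathscr{P}^{(k)}_1(Q)=Q$ and, for $n\ge2$, $$\mathscr{P}^{(k)}_n(A_{n-1},\dots,A_1,Q)=(k+n-1)\,\partial\mathscr{P}^{(k+1)}_{n-1}+:\Big(Q+\sum_{i=1}^{n-1}A_i\Big)\mathscr{P}^{(k+1)}_{n-1}:,$$ where $\mathscr{P}^{(k+1)}_{n-1}=\mathscr{P}^{(k+1)}_{n-1}(A_{n-2},\dots,A_1,Q)$. Then, in the $n[0]$ realization at level $k$ (with $A_i,Q$ the currents of that realization), the field $\mathcal{F}^{(k)}_{n[0]}=-:\mathscr{P}^{(k)}_n(A_{n-1},\dots,A_1,Q)e^{-\Xi}:$ commutes with the screenings $E_i$ ($1\le i\le n-1$) and $\Psi$, i.e. lies in $\mathcal{W}_{n[0]}(k)$. Equivalently, $\mathcal{F}^{(k)}_{n[0]}=\big((k+n-1)\partial+n\mathcal{H}^{(k)}_{n[0]}-(n-1)\mathcal{H}^{(k+1)}_{(n-1)[0]}\big)\mathcal{F}^{(k+1)}_{(n-1)[0]}$, where the level-$(k+1)$ rank-$(n-1)$ realization is built from the same fields $A_{n-2},\dots,A_1,Q,Y$.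
   Context: Setup for $m=0$ at rank $n\ge2$ and generic level $k$ ($k\neq -n$), $K=k+n$: free scalar fields $\varphi=(\varphi_1,\dots,\varphi_{n+1})$ with $\partial\varphi_i(z)\partial\varphi_j(w)\sim\delta_{ij}(z-w)^{-2}$; vectors $a_{n-1},\dots,a_1,\psi,\xi\in\mathbb{C}^{n+1}$ with nonzero products $(a_i,a_i)=2K$, $(a_i,a_{i+1})=-K$ ($1\le i\le n-2$), $(a_1,\psi)=-K$, $(\psi,\psi)=1$, $(\psi,\xi)=1$, all others (incl. $(\xi,\xi)$, $(a_i,\xi)$) zero. Currents $A_i=(a_i,\partial\varphi)$, $Q=(\psi,\partial\varphi)$, $Y=(\xi,\partial\varphi)$, field $\Xi=(\xi,\varphi)$. Screenings $E_i=\oint e^{(a_i,\varphi)}$, $\Psi=\oint e^{(\psi,\varphi)}$; a field $X(w)$ commutes with $\oint s$ if the residue at $z=w$ of $s(z)X(w)$ vanishes. $\mathcal{W}_{n[0]}(k)$ is the centralizer of these screenings in the space of fields $:P(\partial\varphi)e^{p\Xi}:$, $p\in\mathbb{Z}$. Note that the rank-$(n-1)$, level-$(k+1)$ realization has the same value $K=(k+1)+(n-1)$, so its vectors $a_{n-2},\dots,a_1,\psi,\xi$ can be identified with those of the rank-$n$ level-$k$ one. $\mathcal{H}^{(k)}_{n[0]}=\ell_n(k)Y+\sum_{i=1}^{n-1}\frac{n-i}{n}A_i+Q$ with $\ell_n(k)=\frac{n-1}{n}k+n-2$. *)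

(* Defs.v *)
From HB Require Import structures.
From mathcomp Require Import all_boot all_order all_algebra.
Set Implicit Arguments. Unset Strict Implicit. Unset Printing Implicit Defensive.
Import Order.TTheory GRing.Theory Num.Theory.
Local Open Scope ring_scope.

(* Syntax of (normal-ordered) differential polynomials in the free bosons
   phi_0, ..., phi_{N-1}:  DVar i m  stands for  d^{m+1} phi_i.
   Normal ordering of free-boson differential polynomials is commutative,
   so the normal-ordered product is DMul. *)
Inductive dpoly (C : Type) (N : nat) : Type :=
| DCst of C
| DVar of 'I_N & nat
| DAdd of dpoly C N & dpoly C N
| DMul of dpoly C N & dpoly C N.
Arguments DCst {C N}.
Arguments DVar {C N}.
Arguments DAdd {C N}.
Arguments DMul {C N}.

Fixpoint deval (C : Type) (N : nat) (R : pzRingType) (cst : C -> R)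
    (var : 'I_N -> nat -> R) (p : dpoly C N) : R :=
  match p with
  | DCst c => cst c
  | DVar i m => var i m
  | DAdd p q => deval cst var p + deval cst var q
  | DMul p q => deval cst var p * deval cst var q
  end.

Fixpoint dderiv (C : fieldType) (N : nat) (p : dpoly C N) : dpoly C N :=
  match p with
  | DCst _ => DCst 0
  | DVar i m => DVar i m.+1
  | DAdd p q => DAdd (dderiv p) (dderiv q)
  | DMul p q => DAdd (DMul (dderiv p) q) (DMul p (dderiv q))
  end.

Definition dotp (C : fieldType) (N : nat) (u v : 'rV[C]_N) : C :=
  \sum_(i < N) u 0 i * v 0 i.

Definition lin (C : fieldType) (N : nat) (v : 'rV[C]_N) (m : nat) : dpoly C N :=
  foldr (fun i acc => DAdd (DMul (DCst (v 0 i)) (DVar i m)) acc) (DCst 0)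
        (enum 'I_N).

(* d^j e^{(alpha,phi)} = :bell alpha j  e^{(alpha,phi)}: *)
Fixpoint bell (C : fieldType) (N : nat) (alpha : 'rV[C]_N) (j : nat) : dpoly C N :=
  match j with
  | 0 => DCst 1
  | j.+1 => DAdd (dderiv (bell alpha j)) (DMul (lin alpha 0) (bell alpha j))
  end.

(* A "jet" J : nat -> 'rV_N records values J m = d^{m+1} phi (w). *)
Definition jeval (C : fieldType) (N : nat) (J : nat -> 'rV[C]_N) (p : dpoly C N) : C :=
  deval id (fun i m => J m 0 i) p.

(* Wick contraction of e^{(alpha,phi)(z)} with d^{m+1}phi_i(w) is
   alpha_i * d_w^{m+1} log(z-w) = - alpha_i m! (z-w)^{-(m+1)}.
   P with all contractions performed, as a polynomial in y = (z-w)^{-1}. *)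
Definition shift_poly (C : fieldType) (N : nat) (alpha : 'rV[C]_N)
    (J : nat -> 'rV[C]_N) (P : dpoly C N) : {poly C} :=
  deval (fun c => c%:P)
        (fun i m => (J m 0 i)%:P - (alpha 0 i * (m`!)%:R) *: 'X^(m.+1)) P.

(* Residue at z = w of  e^{(alpha,phi)}(z) :P e^{(beta,phi)}:(w), where
   s = (alpha,beta) is an integer:  coefficient of (z-w)^{-1} in
   (z-w)^s * sum_j (z-w)^j/j! bell_j * Ptilde((z-w)^{-1}),
   evaluated at the jet J (the result is the polynomial part of the field
   :R e^{(alpha+beta,phi)}:). *)
Definition ope_residue (C : fieldType) (N : nat) (alpha : 'rV[C]_N) (s : int)
    (P : dpoly C N) (J : nat -> 'rV[C]_N) : C :=
  let Pt := shift_poly alpha J P in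
  \sum_(j < size Pt + absz s)
     (jeval J (bell alpha j) / (j`!)%:R) *
     (if (0 <= s + (j : nat)%:Z + 1) then Pt`_(absz (s + (j : nat)%:Z + 1)) else 0).

Definition commutes_screening (C : fieldType) (N : nat) (alpha beta : 'rV[C]_N)
    (P : dpoly C N) : Prop :=
  exists s : int, dotp alpha beta = s%:~R /\
    forall J : nat -> 'rV[C]_N, ope_residue alpha s P J = 0.

(* fields :P e^{p Xi}: *)
Record field (C : Type) (N : nat) := Field { fpoly : dpoly C N; fexp : int }.
Arguments Field {C N}.

Definition field_eq (C : fieldType) (N : nat) (X Y : field C N) : Prop :=
  fexp X = fexp Y /\ forall J : nat -> 'rV[C]_N, jeval J (fpoly X) = jeval J (fpoly Y).

(* d :P e^{p Xi}: = :(dP + p (xi,d phi) P) e^{p Xi}: *)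
Definition fderiv (C : fieldType) (N : nat) (xi : 'rV[C]_N) (X : field C N) : field C N :=
  Field (DAdd (dderiv (fpoly X)) (DMul (DMul (DCst (fexp X)%:~R) (lin xi 0)) (fpoly X)))
        (fexp X).

Definition apply_diffop (C : fieldType) (N : nat) (xi : 'rV[C]_N) (c : C)
    (H : dpoly C N) (X : field C N) : field C N :=
  Field (DAdd (DMul (DCst c) (fpoly (fderiv xi X))) (DMul H (fpoly X))) (fexp X).

Definition inW (C : fieldType) (n : nat) (a : nat -> 'rV[C]_n.+1)
    (psi xi : 'rV[C]_n.+1) (X : field C n.+1) : Prop :=
  (forall i, (1 <= i <= n.-1)%N -> commutes_screening (a i) (xi *~ fexp X) (fpoly X))
  /\ commutes_screening psi (xi *~ fexp X) (fpoly X).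

Definition sumA (C : fieldType) (N : nat) (A : nat -> dpoly C N) (m : nat) : dpoly C N :=
  foldr (fun i acc => DAdd (A i) acc) (DCst 0) (iota 1 m).

(* Pcal A Q k n = P^{(k)}_n(A_{n-1},...,A_1,Q)  for n >= 1  (n = 0 unused) *)
Fixpoint Pcal (C : fieldType) (N : nat) (A : nat -> dpoly C N) (Q : dpoly C N)
    (k : C) (n : nat) : dpoly C N :=
  match n with
  | 0 => DCst 0
  | m.+1 =>
    if m is 0 then Q
    else DAdd (DMul (DCst (k + m%:R)) (dderiv (Pcal A Q (k + 1) m)))
              (DMul (DAdd Q (sumA A m)) (Pcal A Q (k + 1) m))
  end.

Definition ell (C : fieldType) (n : nat) (k : C) : C :=
  (n.-1)%:R / n%:R * k + n%:R - 2.

Definition Hcal (C : fieldType) (N : nat) (A : nat -> dpoly C N) (Q Y : dpoly C N)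
    (k : C) (n : nat) : dpoly C N :=
  DAdd (DMul (DCst (ell n k)) Y)
       (DAdd (foldr (fun i acc => DAdd (DMul (DCst ((n - i)%:R / n%:R)) (A i)) acc)
                    (DCst 0) (iota 1 n.-1))
             Q).

(* Main.v *)
Require Import Defs.
From HB Require Import structures.
From mathcomp Require Import all_boot all_order all_algebra.
From mathcomp.algebra_tactics Require Import ring.
From mathcomp Require Import zify.
Import Order.TTheory GRing.Theory Num.Theory.
Local Open Scope ring_scope.
Set Implicit Arguments. Unset Strict Implicit. Unset Printing Implicit Defensive.

Definition tpoly (C : fieldType) (N : nat) (J : nat -> 'rV[C]_N) (p : dpoly C N) : {poly C} :=
  deval (fun c => c%:P) (fun i m => (J m 0 i)%:P + (J m.+1 0 i) *: 'X) p.

Lemma tpoly_horner (C : fieldType) N (J : nat -> 'rV[C]_N) p t :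
  (tpoly J p).[t] = jeval (fun m => J m + t *: J m.+1) p.
Proof.
elim: p => [c|i m|p IHp q IHq|p IHp q IHq] /=; rewrite /tpoly /jeval /=.
- by rewrite hornerC.
- by rewrite hornerD hornerC hornerZ hornerX !mxE mulrC.
- by rewrite hornerD -/(tpoly J p) -/(tpoly J q) IHp IHq.
- by rewrite hornerM -/(tpoly J p) -/(tpoly J q) IHp IHq.
Qed.

Lemma tpoly_coef (C : fieldType) N (J : nat -> 'rV[C]_N) p :
  (tpoly J p)`_0 = jeval J p /\ (tpoly J p)`_1 = jeval J (dderiv p).
Proof.
elim: p => [c|i m|p [IH0 IH1] q [JH0 JH1]|p [IH0 IH1] q [JH0 JH1]];
  rewrite /tpoly /jeval /=.
- by rewrite !coefC.
- by rewrite !coefD !coefC !coefZ !coefX /= mulr0 mulr1 addr0 add0r.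
- by rewrite !coefD -/(tpoly J p) -/(tpoly J q) IH0 IH1 JH0 JH1.
- rewrite -/(tpoly J p) -/(tpoly J q) !coefM !big_ord_recr !big_ord0 /=.
  rewrite -/(jeval J p) -/(jeval J q) -/(jeval J (dderiv p)) -/(jeval J (dderiv q)).
  by rewrite !add0r IH0 JH0 IH1 JH1 addrC.
Qed.

Lemma poly_allroots0 (C : numDomainType) (q : {poly C}) :
  (forall t, q.[t] = 0) -> q = 0.
Proof.
move=> H; apply/eqP; apply/negPn/negP => nz.
suff: (size [seq (i%:R : C) | i <- iota 0 (size q)] < size q)%N.
  by rewrite size_map size_iota ltnn.
apply: (max_poly_roots nz).
- by apply/allP => x /mapP [i _ ->]; rewrite /root H.
- rewrite map_inj_uniq ?iota_uniq // => i j /eqP; rewrite eqr_nat => /eqP.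
  done.
Qed.

Lemma L0 (C : numFieldType) N (p : dpoly C N) :
  (forall J, jeval J p = 0) -> forall J, jeval J (dderiv p) = 0.
Proof.
move=> H J; have [_ <-] := tpoly_coef J p.
have -> : tpoly J p = 0 by apply: poly_allroots0 => t; rewrite tpoly_horner H.
by rewrite coef0.
Qed.

Lemma Lcong (C : numFieldType) N (p q : dpoly C N) :
  (forall J, jeval J p = jeval J q) -> forall J, jeval J (dderiv p) = jeval J (dderiv q).
Proof.
move=> H J.
have H0 : forall J', jeval J' (DAdd p (DMul (DCst (-1)) q)) = 0.
  by move=> J'; rewrite /jeval /= -!/(jeval J' _) H mulN1r subrr.
have := L0 H0 J.
rewrite /jeval /= -!/(jeval J _) mul0r add0r mulN1r => /eqP.
by rewrite subr_eq0 => /eqP.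
Qed.
Fixpoint dsum (C : fieldType) N (f : nat -> dpoly C N) (n : nat) : dpoly C N :=
  match n with 0 => DCst 0 | n'.+1 => DAdd (dsum f n') (f n') end.

Fixpoint ptc (C : fieldType) N (al : 'rV[C]_N) (P : dpoly C N) (l : nat) : dpoly C N :=
  match P with
  | DCst c => if l == 0%N then DCst c else DCst 0
  | DVar i m => if l == 0%N then DVar i m
                else if l == m.+2.-1 then DCst (- (al 0 i * (m`!)%:R)) else DCst 0
  | DAdd p q => DAdd (ptc al p l) (ptc al q l)
  | DMul p q => dsum (fun a => DMul (ptc al p a) (ptc al q (l - a))) l.+1
  end.

Fixpoint dg (C : Type) N (P : dpoly C N) : nat :=
  match P with
  | DCst _ => 0
  | DVar _ m => m.+1
  | DAdd p q => maxn (dg p) (dg q)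
  | DMul p q => (dg p + dg q)%N
  end.

Lemma jeval_dsum (C : fieldType) N (J : nat -> 'rV[C]_N) f n :
  jeval J (dsum f n) = \sum_(a < n) jeval J (f a).
Proof.
elim: n => [|n IH]; first by rewrite big_ord0.
by rewrite big_ord_recr /= /jeval /= -!/(jeval J _) IH.
Qed.

Lemma dderiv_dsum (C : fieldType) N (J : nat -> 'rV[C]_N) f n :
  jeval J (dderiv (dsum f n)) = \sum_(a < n) jeval J (dderiv (f a)).
Proof.
elim: n => [|n IH]; first by rewrite big_ord0.
by rewrite big_ord_recr /= /jeval /= -!/(jeval J _) IH.
Qed.

Lemma shift_mul (C : fieldType) N (al : 'rV[C]_N) J p q :
  shift_poly al J (DMul p q) = shift_poly al J p * shift_poly al J q.
Proof. by []. Qed.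
Lemma shift_add (C : fieldType) N (al : 'rV[C]_N) J p q :
  shift_poly al J (DAdd p q) = shift_poly al J p + shift_poly al J q.
Proof. by []. Qed.
Lemma shift_cst (C : fieldType) N (al : 'rV[C]_N) J c :
  shift_poly al J (DCst c) = c%:P.
Proof. by []. Qed.
Lemma shift_var (C : fieldType) N (al : 'rV[C]_N) J i m :
  shift_poly al J (DVar i m) = (J m 0 i)%:P - (al 0 i * (m`!)%:R) *: 'X^(m.+1).
Proof. by []. Qed.
Lemma jeval_mul (C : fieldType) N (J : nat -> 'rV[C]_N) p q :
  jeval J (DMul p q) = jeval J p * jeval J q.
Proof. by []. Qed.
Lemma jeval_add (C : fieldType) N (J : nat -> 'rV[C]_N) p q :
  jeval J (DAdd p q) = jeval J p + jeval J q.
Proof. by []. Qed.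
Lemma jeval_cst (C : fieldType) N (J : nat -> 'rV[C]_N) c :
  jeval J (DCst c) = c.
Proof. by []. Qed.
Lemma jeval_var (C : fieldType) N (J : nat -> 'rV[C]_N) i m :
  jeval J (DVar i m) = J m 0 i.
Proof. by []. Qed.
Definition jevalE := (jeval_mul, jeval_add, jeval_cst, jeval_var).
Definition shiftE := (shift_mul, shift_add, shift_cst, shift_var).

Lemma jeval_ptc (C : fieldType) N (al : 'rV[C]_N) J P l :
  jeval J (ptc al P l) = (shift_poly al J P)`_l.
Proof.
elim: P l => [c|i m|p IHp q IHq|p IHp q IHq] l.
- by rewrite /= shift_cst coefC; case: (l == 0%N).
- rewrite /= shift_var coefB coefC coefZ coefXn.
  case: l => [|l] /=; first by rewrite jeval_var mulr0 subr0.
  case: eqP => [E|E] /=; first by rewrite jeval_cst mulr1 sub0r.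
  by rewrite jeval_cst mulr0 subr0.
- by rewrite /= jeval_add shift_add coefD IHp IHq.
- rewrite (_ : ptc al (DMul p q) l = dsum (fun a => DMul (ptc al p a) (ptc al q (l - a))) l.+1) //.
  rewrite jeval_dsum shift_mul coefM; apply: eq_bigr => a _.
  by rewrite jeval_mul IHp IHq.
Qed.

Lemma size_shift (C : fieldType) N (al : 'rV[C]_N) J P :
  (size (shift_poly al J P) <= (dg P).+1)%N.
Proof.
elim: P => [c|i m|p IHp q IHq|p IHp q IHq].
- by rewrite shift_cst size_polyC; case: (c != 0).
- rewrite shift_var /=; apply: (leq_trans (size_add _ _)).
  rewrite geq_max size_polyC; apply/andP; split; first by case: (_ != 0).
  by rewrite size_opp; apply: (leq_trans (size_scale_leq _ _)); rewrite size_polyXn.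
- rewrite shift_add /=; apply: (leq_trans (size_add _ _)).
  rewrite /= geq_max (leq_trans IHp) ?(leq_trans IHq) //.
    by rewrite ltnS leq_max leqnn orbT.
  by rewrite ltnS leq_max leqnn.
- rewrite shift_mul /=; apply: (leq_trans (size_mul_leq _ _)).
  have := leq_add IHp IHq; rewrite /=; lia.
Qed.

Lemma ptc_big (C : fieldType) N (al : 'rV[C]_N) J P l :
  (dg P < l)%N -> jeval J (ptc al P l) = 0.
Proof.
move=> H; rewrite jeval_ptc nth_default //.
by apply: leq_trans (size_shift al J P) H.
Qed.

Definition dPhi (C : fieldType) N (al : 'rV[C]_N) J (P : dpoly C N) : {poly C} :=
  \poly_(l < (dg P).+1) jeval J (dderiv (ptc al P l)).

Lemma coef_dPhi (C : numFieldType) N (al : 'rV[C]_N) J P l :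
  (dPhi al J P)`_l = jeval J (dderiv (ptc al P l)).
Proof.
rewrite coef_poly; case: ltnP => // H.
by rewrite (L0 (p := ptc al P l)) // => J'; apply: ptc_big.
Qed.

Lemma dPhi_mul (C : numFieldType) N (al : 'rV[C]_N) J p q :
  dPhi al J (DMul p q) = dPhi al J p * shift_poly al J q + shift_poly al J p * dPhi al J q.
Proof.
apply/polyP => l; rewrite coef_dPhi.
rewrite (_ : ptc al (DMul p q) l = dsum (fun a => DMul (ptc al p a) (ptc al q (l - a))) l.+1) //.
rewrite dderiv_dsum coefD !coefM -big_split /=.
apply: eq_bigr => a _; rewrite /= jeval_add !jeval_mul !coef_dPhi !jeval_ptc.
by [].
Qed.

Lemma dPhi_add (C : numFieldType) N (al : 'rV[C]_N) J p q :
  dPhi al J (DAdd p q) = dPhi al J p + dPhi al J q.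
Proof. by apply/polyP => l; rewrite coefD !coef_dPhi /= jeval_add. Qed.

Lemma dPhi_cst (C : numFieldType) N (al : 'rV[C]_N) J c :
  dPhi al J (DCst c) = 0.
Proof. by apply/polyP => l; rewrite coef0 coef_dPhi /=; case: (l == 0%N). Qed.

Lemma dPhi_var (C : numFieldType) N (al : 'rV[C]_N) J i m :
  dPhi al J (DVar i m) = (J m.+1 0 i)%:P.
Proof.
apply/polyP => l; rewrite coefC coef_dPhi /=.
by case: (l == 0%N) => //; case: (l == m.+1).
Qed.

Lemma Phi_dderiv (C : numFieldType) N (al : 'rV[C]_N) J P :
  shift_poly al J (dderiv P) = dPhi al J P + 'X^2 * (shift_poly al J P)^`().
Proof.
elim: P => [c|i m|p IHp q IHq|p IHp q IHq].
- by rewrite dPhi_cst !shift_cst derivC mulr0 addr0.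
- rewrite [dderiv _]/= dPhi_var !shift_var derivB derivC sub0r derivZ derivXn mulrN -scalerAr.
  rewrite /= -[m.+2]/(2 + m)%N exprD.
  rewrite factS natrM -!mul_polyC !polyCM -[_ *+ m.+1]mulr_natr !rmorph_nat; ring.
- by rewrite [dderiv _]/= !shift_add dPhi_add derivD IHp IHq; ring.
- by rewrite [dderiv _]/= shift_add !shift_mul dPhi_mul derivM IHp IHq; ring.
Qed.
Definition ee (C : fieldType) N (al : 'rV[C]_N) J j : C := jeval J (bell al j) / (j`!)%:R.

Definition Res (C : fieldType) N (al : 'rV[C]_N) (o : nat) J (P : dpoly C N) (B : nat) : C :=
  \sum_(0 <= j < B) ee al J j * (shift_poly al J P)`_(j + o).

Definition rep (C : fieldType) N (al : 'rV[C]_N) (o : nat) (P : dpoly C N) (B : nat) : dpoly C N :=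
  dsum (fun j => DMul (DMul (DCst ((j`!)%:R^-1)) (bell al j)) (ptc al P (j + o))) B.

Definition Mop (C : fieldType) N (c : C) (T P : dpoly C N) : dpoly C N :=
  DAdd (DMul (DCst c) (dderiv P)) (DMul T P).

Lemma jeval_rep (C : fieldType) N (al : 'rV[C]_N) o J P B :
  jeval J (rep al o P B) = Res al o J P B.
Proof.
rewrite /rep jeval_dsum /Res big_mkord; apply: eq_bigr => j _.
by rewrite !jevalE jeval_ptc /ee [_^-1 * _]mulrC.
Qed.

Lemma dbell (C : fieldType) N (al : 'rV[C]_N) J j :
  jeval J (dderiv (bell al j)) = jeval J (bell al j.+1) - jeval J (lin al 0) * jeval J (bell al j).
Proof. by rewrite [bell al j.+1]/= jeval_add jeval_mul addrK. Qed.

Lemma dee (C : numFieldType) N (al : 'rV[C]_N) J j :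
  jeval J (dderiv (DMul (DCst ((j`!)%:R^-1)) (bell al j))) =
  (j.+1)%:R * ee al J j.+1 - jeval J (lin al 0) * ee al J j.
Proof.
rewrite [dderiv _]/= !jevalE dbell /ee factS natrM mul0r add0r.
have h1 : (j`!)%:R != 0 :> C by rewrite pnatr_eq0 -lt0n fact_gt0.
have h2 : (j.+1)%:R != 0 :> C by rewrite pnatr_eq0.
by field; rewrite h1 addrC natr1 h2.
Qed.

Lemma drep (C : numFieldType) N (al : 'rV[C]_N) o J P B :
  jeval J (dderiv (rep al o P B)) =
  \sum_(0 <= j < B) (((j.+1)%:R * ee al J j.+1 - jeval J (lin al 0) * ee al J j)
       * (shift_poly al J P)`_(j + o) + ee al J j * (dPhi al J P)`_(j + o)).
Proof.
rewrite /rep dderiv_dsum big_mkord; apply: eq_bigr => j _.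
rewrite [dderiv (DMul _ _)]/= jeval_add !jeval_mul dee coef_dPhi jeval_ptc.
by rewrite /ee jeval_cst [_^-1 * _]mulrC.
Qed.

Lemma shift_Mop (C : numFieldType) N (al : 'rV[C]_N) J c T P :
  shift_poly al J (Mop c T P) =
  c%:P * (dPhi al J P + 'X^2 * (shift_poly al J P)^`()) + shift_poly al J T * shift_poly al J P.
Proof. by rewrite /Mop shift_add !shift_mul shift_cst Phi_dderiv. Qed.

Lemma cX2D (C : fieldType) (q : {poly C}) l :
  ('X^2 * q^`())`_l = (l.-1)%:R * q`_(l.-1).
Proof.
rewrite coefXnM; case: l => [|[|l]] //=; first by rewrite mul0r.
by rewrite mul0r.
by rewrite coef_deriv subn2 /= mulrC mulr_natr.
Qed.

Lemma telesc (C : fieldType) (f : nat -> C) B :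
  \sum_(0 <= j < B) (f j - f j.+1) = f 0%N - f B.
Proof.
rewrite -(opprB (f B)) -telescope_sumr // -sumrN; apply: eq_bigr => j _.
by rewrite opprB.
Qed.

Lemma stepE (C : numFieldType) N (al : 'rV[C]_N) J c u T P B :
  shift_poly al J T = u%:P ->
  (shift_poly al J P)`_B = 0 ->
  Res al 1 J (Mop c T P) B =
  c * (jeval J (dderiv (rep al 1 P B)) + jeval J (lin al 0) * Res al 1 J P B)
  + u * Res al 1 J P B.
Proof.
move=> hT hB; apply/eqP; rewrite -subr_eq0; apply/eqP.
set w := jeval J (lin al 0).
set f := fun j => (j%:R * ee al J j * (shift_poly al J P)`_j).
have -> : Res al 1 J (Mop c T P) B -
  (c * (jeval J (dderiv (rep al 1 P B)) + w * Res al 1 J P B) + u * Res al 1 J P B)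
  = c * \sum_(0 <= j < B) (f j - f j.+1).
  rewrite drep /Res [w * _]mulr_sumr -big_split /= [c * _]mulr_sumr [u * _]mulr_sumr -big_split /=.
  rewrite -sumrB [c * _]mulr_sumr; apply: eq_bigr => j _.
  rewrite shift_Mop hT coefD !coefCM coefD cX2D addn1 /= /f.
  rewrite /w; ring.
by rewrite telesc /f /= hB !mulr0 !mul0r subr0 mulr0.
Qed.

Lemma stepPsi (C : numFieldType) N (al : 'rV[C]_N) J c u T P B :
  shift_poly al J T = u%:P + c *: 'X ->
  (shift_poly al J P)`_B.-1 = 0 ->
  Res al 0 J (Mop c T P) B =
  c * (jeval J (dderiv (rep al 0 P B)) + jeval J (lin al 0) * Res al 0 J P B)
  + u * Res al 0 J P B.
Proof.
move=> hT hB; apply/eqP; rewrite -subr_eq0; apply/eqP.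
set w := jeval J (lin al 0).
set f := fun j => (j%:R * ee al J j * (shift_poly al J P)`_j.-1).
have -> : Res al 0 J (Mop c T P) B -
  (c * (jeval J (dderiv (rep al 0 P B)) + w * Res al 0 J P B) + u * Res al 0 J P B)
  = c * \sum_(0 <= j < B) (f j - f j.+1).
  rewrite drep /Res [w * _]mulr_sumr -big_split /= [c * _]mulr_sumr [u * _]mulr_sumr -big_split /=.
  rewrite -sumrB [c * _]mulr_sumr; apply: eq_bigr => j _.
  rewrite shift_Mop hT mulrDl !coefD !coefCM coefD cX2D -scalerAl coefZ coefXM !addn0 /= /f.
  case: j => [|j] /=; rewrite /w; ring.
by rewrite telesc /f /= hB !mulr0 !mul0r subr0 mulr0.
Qed.

Lemma Res_indep (C : fieldType) N (al : 'rV[C]_N) o J P B B' :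
  (size (shift_poly al J P) <= B)%N -> (size (shift_poly al J P) <= B')%N ->
  Res al o J P B = Res al o J P B'.
Proof.
wlog le : B B' / (B <= B')%N.
  move=> W h1 h2; case: (leqP B B') => [l|/ltnW l]; first exact: W.
  by symmetry; apply: W.
move=> h1 _.
have Z : \sum_(B <= i < B') ee al J i * (shift_poly al J P)`_(i + o) = 0.
  rewrite big_nat_cond big1 // => j /andP [/andP [hj _] _].
  rewrite nth_default ?mulr0 //; apply: leq_trans h1 _; apply: leq_trans hj _.
  exact: leq_addr.
by rewrite /Res [in RHS](@big_cat_nat _ _ _ B) //= Z addr0.
Qed.

Lemma ope_res0 (C : fieldType) N (al : 'rV[C]_N) P J :
  ope_residue al 0 P J = Res al 1 J P (size (shift_poly al J P)).
Proof.
rewrite /ope_residue /Res addn0 big_mkord; apply: eq_bigr => j _.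
by rewrite add0r -PoszD /= /ee.
Qed.

Lemma ope_resm1 (C : fieldType) N (al : 'rV[C]_N) P J :
  ope_residue al (-1) P J = Res al 0 J P (size (shift_poly al J P)).+1.
Proof.
rewrite /ope_residue /Res big_mkord -addn1; apply: eq_bigr => j _.
by rewrite [-1 + _]addrC subrK addn0 /ee.
Qed.

Lemma jeval_foldr (C : fieldType) N (I : Type) (J : nat -> 'rV[C]_N) (F : I -> dpoly C N) s :
  jeval J (foldr (fun i acc => DAdd (F i) acc) (DCst 0) s) = \sum_(i <- s) jeval J (F i).
Proof. by elim: s => [|x s IH]; rewrite ?big_nil ?big_cons //= jeval_add IH. Qed.

Lemma shift_foldr (C : fieldType) N (I : Type) (al : 'rV[C]_N) J (F : I -> dpoly C N) s :
  shift_poly al J (foldr (fun i acc => DAdd (F i) acc) (DCst 0) s) = \sum_(i <- s) shift_poly al J (F i).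
Proof. by elim: s => [|x s IH]; rewrite ?big_nil ?big_cons //= shift_add IH. Qed.

Lemma jeval_lin (C : fieldType) N (J : nat -> 'rV[C]_N) v m :
  jeval J (lin v m) = dotp v (J m).
Proof.
rewrite /lin jeval_foldr big_enum /dotp; apply: eq_bigr => i _.
by rewrite !jevalE.
Qed.

Lemma dotpC (C : fieldType) N (u v : 'rV[C]_N) : dotp u v = dotp v u.
Proof. by rewrite /dotp; apply: eq_bigr => i _; rewrite mulrC. Qed.

Lemma shift_lin (C : fieldType) N (al : 'rV[C]_N) J v :
  shift_poly al J (lin v 0) = (dotp v (J 0))%:P - (dotp al v) *: 'X.
Proof.
rewrite /lin shift_foldr big_enum /dotp.
rewrite (eq_bigr (fun i : 'I_N => (v 0 i * J 0 0 i)%:P - (al 0 i * v 0 i) *: 'X)); last first.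
  move=> i _; rewrite shift_mul shift_cst shift_var /= mulr1 expr1 mulrBr.
  by rewrite -polyCM -!mul_polyC polyCM; ring.
by rewrite sumrB scaler_suml rmorph_sum.
Qed.

Definition Inv (C : fieldType) N (al : 'rV[C]_N) o (P : dpoly C N) : Prop :=
  forall B, ((dg P).+2 <= B)%N -> forall J, Res al o J P B = 0.

Lemma dg_Mop (C : fieldType) N (c : C) (T P : dpoly C N) : (dg P <= dg (Mop c T P))%N.
Proof. by rewrite /Mop /= leq_max leq_addl orbT. Qed.

Lemma shift_coef_big (C : fieldType) N (al : 'rV[C]_N) J P l :
  ((dg P).+1 <= l)%N -> (shift_poly al J P)`_l = 0.
Proof. by move=> h; rewrite nth_default //; apply: leq_trans (size_shift _ _ _) h. Qed.

Lemma inv_step_E (C : numFieldType) N (al : 'rV[C]_N) c (u : (nat -> 'rV[C]_N) -> C) T P :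
  Inv al 1 P -> (forall J, shift_poly al J T = (u J)%:P) -> Inv al 1 (Mop c T P).
Proof.
move=> IP hT B hB J.
have hB' : ((dg P).+2 <= B)%N by apply: leq_trans hB; rewrite !ltnS dg_Mop.
rewrite (stepE _ (hT J)); last by apply: shift_coef_big; apply: leq_trans hB'.
rewrite IP // (L0 (p := rep al 1 P B)) => [|J']; last by rewrite jeval_rep IP.
by rewrite !mulr0 !addr0 mulr0.
Qed.

Lemma inv_step_Psi (C : numFieldType) N (al : 'rV[C]_N) c (u : (nat -> 'rV[C]_N) -> C) T P :
  Inv al 0 P -> (forall J, shift_poly al J T = (u J)%:P + c *: 'X) -> Inv al 0 (Mop c T P).
Proof.
move=> IP hT B hB J.
have hB' : ((dg P).+2 <= B)%N by apply: leq_trans hB; rewrite !ltnS dg_Mop.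
rewrite (stepPsi (hT J)); last by apply: shift_coef_big; move: hB'; case: B {hB} => //.
rewrite IP // (L0 (p := rep al 0 P B)) => [|J']; last by rewrite jeval_rep IP.
by rewrite !mulr0 !addr0 mulr0.
Qed.

Lemma ee0 (C : fieldType) N (al : 'rV[C]_N) J : ee al J 0 = 1.
Proof. by rewrite /ee /= jeval_cst divr1. Qed.

Lemma ee1 (C : fieldType) N (al : 'rV[C]_N) J : ee al J 1 = jeval J (lin al 0).
Proof. by rewrite /ee /= jeval_add jeval_mul !jeval_cst divr1 mulr1 add0r. Qed.

Lemma Res1_quad (C : fieldType) N (al : 'rV[C]_N) J P B z0 z1 z2 :
  shift_poly al J P = z0%:P + z1 *: 'X + z2 *: 'X^2 -> (2 <= B)%N ->
  Res al 1 J P B = z1 + jeval J (lin al 0) * z2.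
Proof.
move=> h hB; have sz : (size (shift_poly al J P) <= 3)%N.
  rewrite h; apply: leq_trans (size_add _ _) _; rewrite geq_max.
  apply/andP; split; last by apply: leq_trans (size_scale_leq _ _) _; rewrite size_polyXn.
  apply: leq_trans (size_add _ _) _; rewrite geq_max size_polyC.
  apply/andP; split; first by case: (_ != 0).
  by apply: leq_trans (size_scale_leq _ _) _; rewrite size_polyX.
have E2 : Res al 1 J P B = Res al 1 J P 2.
  have Z : \sum_(2 <= i < B) ee al J i * (shift_poly al J P)`_(i + 1) = 0.
    rewrite big_nat_cond big1 // => j /andP [/andP [hj _] _].
    by rewrite nth_default ?mulr0 //; apply: leq_trans sz _; rewrite addn1 ltnS.
  by rewrite /Res (@big_cat_nat _ _ _ 2) //= Z addr0.
rewrite E2 /Res big_mkord !big_ord_recr big_ord0 /= ee0 ee1 add0r mul1r h.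
by rewrite !coefD !coefC !coefZ !coefX !coefXn /=; ring.
Qed.

Lemma Res0_lin (C : fieldType) N (al : 'rV[C]_N) J P B z0 z1 :
  shift_poly al J P = z0%:P + z1 *: 'X -> (2 <= B)%N ->
  Res al 0 J P B = z0 + jeval J (lin al 0) * z1.
Proof.
move=> h hB; have sz : (size (shift_poly al J P) <= 2)%N.
  rewrite h; apply: leq_trans (size_add _ _) _; rewrite geq_max size_polyC.
  apply/andP; split; first by case: (_ != 0).
  by apply: leq_trans (size_scale_leq _ _) _; rewrite size_polyX.
have E2 : Res al 0 J P B = Res al 0 J P 2.
  have Z : \sum_(2 <= i < B) ee al J i * (shift_poly al J P)`_(i + 0) = 0.
    rewrite big_nat_cond big1 // => j /andP [/andP [hj _] _].
    by rewrite nth_default ?mulr0 //; apply: leq_trans sz _; rewrite addn0.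
  by rewrite /Res (@big_cat_nat _ _ _ 2) //= Z addr0.
rewrite E2 /Res big_mkord !big_ord_recr big_ord0 /= ee0 ee1 add0r mul1r h.
by rewrite !coefD !coefC !coefZ !coefX /=; ring.
Qed.

Lemma dPhi_lin1 (C : numFieldType) N (al : 'rV[C]_N) J g (p : dpoly C N) (K : C) (g0 : (nat -> 'rV[C]_N) -> C) :
  (forall J, shift_poly al J g = (g0 J)%:P + (K * jeval J p) *: 'X) ->
  dPhi al J g = (jeval J (dderiv (ptc al g 0)))%:P + (K * jeval J (dderiv p)) *: 'X.
Proof.
move=> hg; apply/polyP => l; rewrite coef_dPhi coefD coefC coefZ coefX.
case: l => [|[|l]] /=; first by rewrite mulr0 addr0.
- rewrite add0r mulr1.
  have -> : jeval J (dderiv (ptc al g 1)) = jeval J (dderiv (DMul (DCst K) p)).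
    apply: Lcong => J'; rewrite jeval_ptc hg jeval_mul jeval_cst coefD coefC coefZ coefX /=.
    by rewrite add0r mulr1.
  by rewrite [dderiv _]/= jeval_add !jeval_mul jeval_cst mul0r add0r.
- rewrite mulr0 addr0; apply: L0 => J'.
  by rewrite jeval_ptc hg coefD coefC coefZ coefX /= mulr0 addr0.
Qed.

Lemma newscreen (C : numFieldType) N (al : 'rV[C]_N) (c K : C) (u u' : (nat -> 'rV[C]_N) -> C) T g p :
  (forall J, shift_poly al J g = (c * jeval J (dderiv p) + u' J * jeval J p)%:P + (K * jeval J p) *: 'X) ->
  (forall J, shift_poly al J T = (u J)%:P - K *: 'X) ->
  (forall J, u J - u' J = jeval J (lin al 0)) ->
  c = K - 1 ->
  Inv al 1 (Mop c T g).
Proof.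
move=> hg hT hu hc B hB J.
have hd := dPhi_lin1 J hg.
set p0 := jeval J p; set dp := jeval J (dderiv p); set d0 := jeval J (dderiv (ptc al g 0)).
rewrite (@Res1_quad _ _ _ _ _ _ (c * d0 + u J * (c * dp + u' J * p0))
   (c * K * dp + u J * K * p0 - K * (c * dp + u' J * p0)) (c * K * p0 - K * K * p0)).
- have -> : u J = u' J + jeval J (lin al 0) by rewrite -hu; ring.
  rewrite hc; ring.
- rewrite shift_Mop hT hd hg derivD derivC derivZ derivX add0r.
  rewrite -!mul_polyC mulr1 !(polyCD, polyCB, polyCM, polyCN) /d0 /dp /p0.
  ring.
- by apply: leq_trans hB.
Qed.

Definition YF (C : fieldType) N (al : 'rV[C]_N) (P : dpoly C N) : Prop :=
  forall J l, (0 < l)%N -> (shift_poly al J P)`_l = 0.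

Lemma YF_step (C : numFieldType) N (al : 'rV[C]_N) c (u : (nat -> 'rV[C]_N) -> C) T P :
  YF al P -> (forall J, shift_poly al J T = (u J)%:P) -> YF al (Mop c T P).
Proof.
move=> hP hT J l hl; rewrite shift_Mop hT !coefD !coefCM coefD cX2D coef_dPhi.
rewrite (L0 (p := ptc al P l)) => [|J']; last by rewrite jeval_ptc hP.
rewrite (hP J l hl) mulr0 addr0 add0r.
by case: l hl => [|[|l]] //= _; rewrite ?mul0r ?mulr0 // hP ?mulr0.
Qed.

Lemma YF_const (C : numFieldType) N (al : 'rV[C]_N) J P :
  YF al P -> shift_poly al J P = (jeval J (ptc al P 0))%:P /\
             dPhi al J P = (jeval J (dderiv (ptc al P 0)))%:P.
Proof.
move=> hP; split; apply/polyP => l; rewrite coefC.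
- by case: l => [|l] /=; rewrite ?jeval_ptc // hP.
- rewrite coef_dPhi; case: l => [|l] //=; apply: L0 => J'.
  by rewrite jeval_ptc hP.
Qed.

Lemma sum_iotaS (C : fieldType) (F : nat -> C) j :
  \sum_(i <- iota 1 j.+1) F i = \sum_(i <- iota 1 j) F i + F j.+1.
Proof.
by rewrite -[j.+1]addn1 iotaD big_cat /= big_seq1 add1n addn1.
Qed.

Definition SS (C : fieldType) N (a : nat -> 'rV[C]_N) (psi al : 'rV[C]_N) j : C :=
  dotp al psi + \sum_(i <- iota 1 j) dotp al (a i).

Definition uT (C : fieldType) N (a : nat -> 'rV[C]_N) (psi : 'rV[C]_N) (J : nat -> 'rV[C]_N) j : C :=
  dotp psi (J 0%N) + \sum_(i <- iota 1 j) dotp (a i) (J 0%N).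

Lemma shift_T (C : fieldType) N (a : nat -> 'rV[C]_N) psi al J j :
  shift_poly al J (DAdd (lin psi 0) (sumA (fun i => lin (a i) 0) j)) =
  (uT a psi J j)%:P - (SS a psi al j) *: 'X.
Proof.
rewrite shift_add /sumA shift_foldr shift_lin.
rewrite (eq_bigr (fun i => (dotp (a i) (J 0%N))%:P - (dotp al (a i)) *: 'X)); last first.
  by move=> i _; rewrite shift_lin.
rewrite sumrB /uT /SS rmorphD scalerDl -rmorph_sum -scaler_suml; ring.
Qed.

Lemma jeval_T (C : fieldType) N (a : nat -> 'rV[C]_N) psi J j :
  jeval J (DAdd (lin psi 0) (sumA (fun i => lin (a i) 0) j)) = uT a psi J j.
Proof.
rewrite jeval_add /sumA jeval_foldr jeval_lin /uT; congr (_ + _).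
by apply: eq_bigr => i _; rewrite jeval_lin.
Qed.

Lemma SSa_formula (C : fieldType) N (a : nat -> 'rV[C]_N) psi (K : C) n :
  (forall i, (1 <= i <= n.-1)%N -> dotp (a i) (a i) = 2 * K) ->
  (forall i, (1 <= i)%N -> (i.+1 <= n.-1)%N -> dotp (a i) (a i.+1) = - K) ->
  (forall i j, (1 <= i <= n.-1)%N -> (1 <= j <= n.-1)%N ->
     i != j -> i != j.+1 -> j != i.+1 -> dotp (a i) (a j) = 0) ->
  dotp (a 1%N) psi = - K ->
  (forall i, (2 <= i <= n.-1)%N -> dotp (a i) psi = 0) ->
  forall i, (1 <= i <= n.-1)%N -> forall j, (j <= n.-1)%N ->
  SS a psi (a i) j = if (j.+2 <= i)%N then 0 else if j.+1 == i then - K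
                     else if j == i then K else 0.
Proof.
move=> H1 H2 H3 H4 H5 i /andP [i1 iN].
elim=> [|j IH] hj.
  rewrite /SS big_nil addr0.
  case: (eqVneq i 1%N) => [->|ne]; first by rewrite H4.
  rewrite H5; last by rewrite iN andbT; case: i i1 ne {iN} => [|[|i]].
  by case: i i1 ne {iN} => [|[|i]].
rewrite /SS sum_iotaS addrA.
have -> : dotp (a i) psi + \sum_(i0 <- iota 1 j) dotp (a i) (a i0) = SS a psi (a i) j by [].
rewrite IH; last by apply: ltnW.
have j1 : (1 <= j.+1 <= n.-1)%N by rewrite hj.
have iN' : (1 <= i <= n.-1)%N by rewrite i1 iN.
have [hA|[hB|[hC|[hD|hE]]]] : (j.+3 <= i \/ i = j.+2 \/ i = j.+1 \/ i = j \/ i < j)%N by lia.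
- have e1 : (j.+2 <= i)%N by lia.
  have e2 : (j.+2 < i)%N by lia.
  rewrite e1 e2 H3 ?addr0 //; apply/eqP; lia.
- by subst i; rewrite ltnn leqnn eqxx add0r dotpC H2.
- have e1 : (j.+2 <= i)%N = false by apply/negbTE; lia.
  have e2 : (j.+2 < i)%N = false by apply/negbTE; lia.
  have e3 : (j.+1 == i) = true by apply/eqP; lia.
  have e5 : (j.+2 == i) = false by apply/negbTE/eqP; lia.
  rewrite e1 e2 e3 e5 -hC H1 //; ring.
- have e1 : (j.+2 <= i)%N = false by apply/negbTE; lia.
  have e2 : (j.+2 < i)%N = false by apply/negbTE; lia.
  have e3 : (j.+1 == i) = false by apply/negbTE/eqP; lia.
  have e4 : (j == i) = true by apply/eqP; lia.
  have e5 : (j.+2 == i) = false by apply/negbTE/eqP; lia.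
  rewrite e1 e2 e3 e4 e5 hD H2 ?subrr //; lia.
- have e1 : (j.+2 <= i)%N = false by apply/negbTE; rewrite -ltnNge; lia.
  have e2 : (j.+2 < i)%N = false by apply/negbTE; rewrite -leqNgt; lia.
  have e3 : (j.+1 == i) = false by apply/negbTE/eqP; lia.
  have e4 : (j == i) = false by apply/negbTE/eqP; lia.
  have e5 : (j.+2 == i) = false by apply/negbTE/eqP; lia.
  rewrite e1 e2 e3 e4 e5 add0r H3 //; apply/eqP; lia.
Qed.

Lemma SSpsi_formula (C : fieldType) N (a : nat -> 'rV[C]_N) psi (K : C) n :
  dotp (a 1%N) psi = - K ->
  (forall i, (2 <= i <= n.-1)%N -> dotp (a i) psi = 0) ->
  dotp psi psi = 1 ->
  forall j, (j <= n.-1)%N -> SS a psi psi j = if j == 0%N then 1 else 1 - K.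
Proof.
move=> H4 H5 H6; elim=> [|j IH] hj; first by rewrite /SS big_nil addr0 H6.
rewrite /SS sum_iotaS addrA.
have -> : dotp psi psi + \sum_(i0 <- iota 1 j) dotp psi (a i0) = SS a psi psi j by [].
rewrite IH; last by apply: ltnW.
case: j {IH} hj => [|j] hj /=; first by rewrite dotpC H4.
by rewrite dotpC H5 ?addr0 //; rewrite hj.
Qed.

Lemma PcalS (C : fieldType) N (A : nat -> dpoly C N) Q k m :
  (1 <= m)%N ->
  Pcal A Q k m.+1 = Mop (k + m%:R) (DAdd Q (sumA A m)) (Pcal A Q (k + 1) m).
Proof. by case: m. Qed.

Lemma YF_Pcal (C : numFieldType) N (a : nat -> 'rV[C]_N) psi al r :
  dotp al psi = 0 ->
  (forall j, (1 <= j)%N -> (j.+1 <= r)%N -> SS a psi al j = 0) ->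
  (1 <= r)%N -> forall k, YF al (Pcal (fun i => lin (a i) 0) (lin psi 0) k r).
Proof.
move=> h0; elim: r => [//|r IH] hS _ k.
case: r IH hS => [|r] IH hS.
  move=> J l hl; rewrite /= shift_lin h0 scale0r subr0 coefC.
  by case: l hl.
rewrite PcalS //; apply: (@YF_step _ _ _ _ (fun J => uT a psi J r.+1)).
  by apply: IH => // j j1 jr; apply: hS => //; apply: ltnW.
by move=> J; rewrite shift_T hS // scale0r subr0.
Qed.

Lemma claim (C : numFieldType) (n : nat) (k : C)
    (a : nat -> 'rV[C]_n.+1) (psi : 'rV[C]_n.+1) :
  (forall i, (1 <= i <= n.-1)%N -> dotp (a i) (a i) = 2 * (k + n%:R)) ->
  (forall i, (1 <= i)%N -> (i.+1 <= n.-1)%N -> dotp (a i) (a i.+1) = - (k + n%:R)) ->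
  (forall i j, (1 <= i <= n.-1)%N -> (1 <= j <= n.-1)%N ->
     i != j -> i != j.+1 -> j != i.+1 -> dotp (a i) (a j) = 0) ->
  dotp (a 1%N) psi = - (k + n%:R) ->
  (forall i, (2 <= i <= n.-1)%N -> dotp (a i) psi = 0) ->
  dotp psi psi = 1 ->
  forall m, (1 <= m <= n)%N -> forall k', k' + m%:R = k + n%:R ->
  (forall i, (1 <= i <= m.-1)%N -> Inv (a i) 1 (Pcal (fun i => lin (a i) 0) (lin psi 0) k' m))
  /\ Inv psi 0 (Pcal (fun i => lin (a i) 0) (lin psi 0) k' m).
Proof.
move=> H1 H2 H3 H4 H5 H6.
set K := k + n%:R.
set A := fun i => lin (a i) 0.
set Q := lin psi 0.
have SSa := SSa_formula H1 H2 H3 H4 H5.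
have SSp := SSpsi_formula H4 H5 H6.
elim=> [//|m IH] /andP [_ mn] k' hk'.
case: m IH mn hk' => [|m] IH mn hk'.
  split=> [i /andP [i1 i0]|]; first by move: i1 i0; case: i.
  move=> B hB J; rewrite (@Res0_lin _ _ _ _ _ _ (dotp psi (J 0%N)) (-1)).
  - by rewrite jeval_lin mulrN1 subrr.
  - by rewrite shift_lin H6 scale1r scaleN1r.
  - by apply: leq_trans hB.
have hc : k' + m.+1%:R = K - 1 by rewrite -hk' -[(m.+2)%:R]natr1; ring.
have [IHE IHP] : (forall i, (1 <= i <= m)%N -> Inv (a i) 1 (Pcal A Q (k' + 1) m.+1))
   /\ Inv psi 0 (Pcal A Q (k' + 1) m.+1).
  apply: IH; first by rewrite /= ltnW.
  by rewrite -hk' -[(m.+2)%:R]natr1; ring.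
rewrite PcalS // hc; split; last first.
  apply: (@inv_step_Psi _ _ _ _ (fun J => uT a psi J m.+1)) => // J.
  rewrite shift_T SSp //; last by move: mn; lia.
  by rewrite -scaleNr opprB.
move=> i /andP [i1 im].
case: (ltngtP i m.+1) im => // [ilt|->] _.
  apply: (@inv_step_E _ _ _ _ (fun J => uT a psi J m.+1)).
    by apply: IHE; rewrite i1 -ltnS.
  move=> J; rewrite shift_T SSa; first last.
  - by move: mn; lia.
  - by rewrite i1 /=; move: mn ilt; lia.
  rewrite ifF; last by apply/negbTE; lia.
  rewrite ifF; last by apply/negbTE/eqP; lia.
  by rewrite ifF ?scale0r ?subr0 //; apply/negbTE/eqP; lia.
have SSm : forall j, (j <= n.-1)%N -> SS a psi (a m.+1) j =
    if (j.+2 <= m.+1)%N then 0 else if j.+1 == m.+1 then - K else if j == m.+1 then K else 0.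
  by move=> j hj; apply: SSa => //; move: mn; lia.
have hT : forall J, shift_poly (a m.+1) J (DAdd Q (sumA A m.+1)) = (uT a psi J m.+1)%:P - K *: 'X.
  move=> J; rewrite shift_T SSm; last by move: mn; lia.
  rewrite ifF; last by apply/negbTE; lia.
  by rewrite ifF ?eqxx //; apply/negbTE/eqP; lia.
case: m IH IHE IHP mn hk' hc SSm hT => [|m] IH IHE IHP mn hk' hc SSm hT.
  apply: (@newscreen _ _ _ (K - 1) K (fun J => uT a psi J 1) (fun J => dotp psi (J 0%N))
            _ _ (DCst 1)) => //.
  - move=> J; rewrite /= /Q shift_lin H4 !jeval_cst mulr0 add0r !mulr1 scaleNr opprK.
    by [].
  - by move=> J; rewrite /uT /= big_cons big_nil addr0 jeval_lin; ring.
have hc2 : k' + 1 + m.+1%:R = K - 1 by rewrite -hk' -[(m.+3)%:R]natr1 -[(m.+2)%:R]natr1; ring.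
rewrite [Pcal A Q (k' + 1) m.+2]PcalS // hc2.
set P2 := Pcal A Q (k' + 1 + 1) m.+1.
have YP : YF (a m.+2) P2.
  apply: YF_Pcal => //.
  - by apply: H5; move: mn; lia.
  - by move=> j j1 jm; rewrite SSm; [rewrite ifT //; lia | move: mn; lia].
apply: (@newscreen _ _ _ (K - 1) K (fun J => uT a psi J m.+2) (fun J => uT a psi J m.+1)
          _ _ (ptc (a m.+2) P2 0)) => //.
- move=> J; have [e1 e2] := YF_const J YP.
  rewrite shift_Mop e1 e2 derivC mulr0 addr0 shift_T SSm; last by move: mn; lia.
  rewrite ifF; last by apply/negbTE; lia.
  rewrite eqxx -!mul_polyC !(polyCD, polyCB, polyCM, polyCN); ring.
- by move=> J; rewrite /uT sum_iotaS jeval_lin; ring.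
Qed.

Lemma Hell (C : numFieldType) (k : C) m :
  (m.+2)%:R * ell m.+2 k - (m.+1)%:R * ell m.+1 (k + 1) = k + (m.+2)%:R - 1.
Proof.
rewrite /ell /=.
have ha : (m.+1)%:R != 0 :> C by rewrite pnatr_eq0.
have hb : (m.+1)%:R + 1 != 0 :> C by rewrite natr1 pnatr_eq0.
rewrite -[(m.+2)%:R]natr1 -[(m.+1)%:R]natr1 in hb *.
field; by rewrite ?natr1 ?pnatr_eq0.
Qed.

Lemma Hsum (C : numFieldType) (x : nat -> C) m :
  (m.+2)%:R * \sum_(i <- iota 1 m.+1) ((m.+2 - i)%:R / (m.+2)%:R * x i)
  - (m.+1)%:R * \sum_(i <- iota 1 m) ((m.+1 - i)%:R / (m.+1)%:R * x i)
  = \sum_(i <- iota 1 m.+1) x i.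
Proof.
have ha : (m.+1)%:R != 0 :> C by rewrite pnatr_eq0.
have hb : (m.+2)%:R != 0 :> C by rewrite pnatr_eq0.
rewrite !sum_iotaS subSnn mulrDr !mulr_sumr.
rewrite addrAC -sumrB; congr (_ + _); last first.
  by rewrite div1r mulrA mulfV // mul1r.
rewrite big_seq_cond [RHS]big_seq_cond; apply: eq_bigr => i /andP [].
rewrite mem_iota => /andP [i1 im] _.
rewrite !natrB; [| lia | lia].
rewrite -[(m.+2)%:R]natr1 in hb *.
by field; rewrite [1 + _]addrC !natr1 !pnatr_eq0.
Qed.

Lemma Res_cmul (C : fieldType) N (al : 'rV[C]_N) o J c P B :
  Res al o J (DMul (DCst c) P) B = c * Res al o J P B.
Proof.
rewrite /Res mulr_sumr; apply: eq_bigr => j _.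
by rewrite shift_mul shift_cst coefCM; ring.
Qed.

Lemma dotpN1 (C : fieldType) N (u v : 'rV[C]_N) : dotp u (v *~ -1) = - dotp u v.
Proof.
by rewrite mulrN1z /dotp -sumrN; apply: eq_bigr => i _; rewrite mxE mulrN.
Qed.

Lemma jeval_Hcal (C : fieldType) N (J : nat -> 'rV[C]_N) A Q Y k nn :
  jeval J (Hcal A Q Y k nn) = ell nn k * jeval J Y +
    \sum_(i <- iota 1 nn.-1) ((nn - i)%:R / nn%:R * jeval J (A i)) + jeval J Q.
Proof.
by rewrite /Hcal !jeval_add jeval_mul jeval_cst jeval_foldr addrA.
Qed.

Unset Implicit Arguments.
Set Strict Implicit.

Theorem lemma2p3 (C : numClosedFieldType) (n : nat) (k : C)
    (a : nat -> 'rV[C]_n.+1) (psi xi : 'rV[C]_n.+1) :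
  (2 <= n)%N ->
  k + n%:R != 0 ->
  (forall i, (1 <= i <= n.-1)%N -> dotp (a i) (a i) = 2 * (k + n%:R)) ->
  (forall i, (1 <= i)%N -> (i.+1 <= n.-1)%N -> dotp (a i) (a i.+1) = - (k + n%:R)) ->
  (forall i j, (1 <= i <= n.-1)%N -> (1 <= j <= n.-1)%N ->
     i != j -> i != j.+1 -> j != i.+1 -> dotp (a i) (a j) = 0) ->
  dotp (a 1%N) psi = - (k + n%:R) ->
  (forall i, (2 <= i <= n.-1)%N -> dotp (a i) psi = 0) ->
  (forall i, (1 <= i <= n.-1)%N -> dotp (a i) xi = 0) ->
  dotp psi psi = 1 ->
  dotp psi xi = 1 ->
  dotp xi xi = 0 ->
  let A := fun i => lin (a i) 0 in
  let Q := lin psi 0 in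
  let Y := lin xi 0 in
  let F := Field (DMul (DCst (-1)) (Pcal A Q k n)) (-1) in
  let F' := Field (DMul (DCst (-1)) (Pcal A Q (k + 1) n.-1)) (-1) in
  inW a psi xi F /\
  field_eq F
    (apply_diffop xi (k + n%:R - 1)
       (DAdd (DMul (DCst n%:R) (Hcal A Q Y k n))
             (DMul (DCst (- (n.-1)%:R)) (Hcal A Q Y (k + 1) n.-1)))
       F').
Proof.
move=> n2 hK H1 H2 H3 H4 H5 H6 H7 H8 H9 A Q Y F F'.
have hn : (1 <= n <= n)%N by rewrite leqnn andbT ltnW.
have [CE CP] := @claim C n k a psi H1 H2 H3 H4 H5 H7 n hn k erefl.
set P := Pcal A Q k n.
have szP : forall al J, (size (shift_poly al J (DMul (DCst (-1)%R) P)) <= (dg P).+2)%N.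
  move=> al J; apply: leq_trans (size_shift _ _ _) _; rewrite /= add0n; exact: leqnSn.
split.
  split.
    move=> i hi; exists 0; split; first by rewrite /F /= dotpN1 H6 ?oppr0.
    move=> J; rewrite /F /= ope_res0 (@Res_indep _ _ _ _ _ _ _ (dg P).+2) //.
    by rewrite Res_cmul CE ?mulr0.
  exists (-1); split; first by rewrite /F /= dotpN1 H8.
  move=> J; rewrite /F /= ope_resm1 (@Res_indep _ _ _ _ _ _ _ (dg P).+2) //.
    by rewrite Res_cmul CP ?mulr0.
  all: try exact: szP.
split; first by [].
move=> J.
have [m em] : exists m, n = m.+2 by exists n.-2; lia.
subst n.
rewrite /F /F' /apply_diffop /fderiv; cbn [fpoly fexp].
rewrite [m.+2.-1]/= /P PcalS //.
set P' := Pcal A Q (k + 1) m.+1.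
have hT : jeval J (sumA A m.+1) = \sum_(i <- iota 1 m.+1) jeval J (A i).
  by rewrite /sumA jeval_foldr.
rewrite [dderiv (DMul _ _)]/= /Mop [sumA]lock [Hcal]lock.
rewrite !(jeval_add, jeval_mul, jeval_cst) -!lock hT !jeval_Hcal [m.+2.-1]/= [m.+1.-1]/=.
have HS : (m.+2)%:R * \sum_(i <- iota 1 m.+1) ((m.+2 - i)%:R / (m.+2)%:R * jeval J (A i))
  - (m.+1)%:R * \sum_(i <- iota 1 m) ((m.+1 - i)%:R / (m.+1)%:R * jeval J (A i))
  = \sum_(i <- iota 1 m.+1) jeval J (A i) := Hsum (fun i => jeval J (A i)) m.
have HE := Hell k m.
have hc : k + m.+1%:R = k + m.+2%:R - 1 by rewrite -[(m.+2)%:R]natr1; ring.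
rewrite -HS hc -HE.
ring.
Qed.
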